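(* Let $B:\mathbb{Z}\times\mathbb{Z}\to\mathbb{R}$ be defined by the recurrence $$B(r,s)=\begin{cases}1 & s\le 0,\\ 0 & s>0 \text{ and } r<s,\\ \min\Big(\tfrac12\big[B(r-1,s)+B(r-1,s-1)\big],\ B(r-2,s-1)\Big) & \text{otherwise.}\end{cases}$$ Then for all integers $c\ge 3$ and $s\ge 2$, $B(cs-1,s)\ge 1-\frac{1}{2^{c-1}}$. *)

(* Defs.v *)
From Stdlib Require Import Reals Lra Lia ZArith.
Open Scope R_scope.

Fixpoint Bf (n : nat) (r s : Z) : R :=
  match n with
  | O => 0
  | S n' =>
      if Z.leb s 0 then 1
      else if Z.ltb r s then 0
      else Rmin ((Bf n' (r - 1) s + Bf n' (r - 1) (s - 1)) / 2)
                (Bf n' (r - 2) (s - 1))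
  end.

(* B(r,s): fuel r+1 suffices, since recursion only happens when r >= s >= 1
   and every recursive call decreases r. See B_eq below. *)
Definition B (r s : Z) : R := Bf (S (Z.to_nat r)) r s.

Lemma Bf_stable : forall n m r s,
  (Z.to_nat r < n)%nat -> (Z.to_nat r < m)%nat -> Bf n r s = Bf m r s.
Proof.
  induction n as [|n IH]; intros m r s Hn Hm; [lia|].
  destruct m as [|m]; [lia|].
  cbn [Bf]. destruct (Z.leb s 0) eqn:E1; [reflexivity|].
  destruct (Z.ltb r s) eqn:E2; [reflexivity|].
  apply Z.leb_gt in E1. apply Z.ltb_ge in E2.
  rewrite (IH m (r-1)%Z s) by lia.
  rewrite (IH m (r-1)%Z (s-1)%Z) by lia.
  rewrite (IH m (r-2)%Z (s-1)%Z) by lia.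
  reflexivity.
Qed.

Lemma B_eq : forall r s : Z,
  B r s = if Z.leb s 0 then 1
          else if Z.ltb r s then 0
          else Rmin ((B (r - 1) s + B (r - 1) (s - 1)) / 2) (B (r - 2) (s - 1)).
Proof.
  intros r s. unfold B at 1. cbn [Bf].
  destruct (Z.leb s 0) eqn:E1; [reflexivity|].
  destruct (Z.ltb r s) eqn:E2; [reflexivity|].
  apply Z.leb_gt in E1. apply Z.ltb_ge in E2.
  unfold B.
  rewrite (Bf_stable _ (S (Z.to_nat (r-1))) (r-1)%Z s) by lia.
  rewrite (Bf_stable _ (S (Z.to_nat (r-1))) (r-1)%Z (s-1)%Z) by lia.
  rewrite (Bf_stable _ (S (Z.to_nat (r-2))) (r-2)%Z (s-1)%Z) by lia.
  reflexivity.
Qed.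

(* Main.v *)
Require Import Defs.
From Stdlib Require Import Reals ZArith QArith Qreals Lra Lia.
Open Scope R_scope.

Fixpoint BfQ (n : nat) (r s : Z) : Q :=
  match n with
  | O => 0%Q
  | S n' =>
      if Z.leb s 0 then 1%Q
      else if Z.ltb r s then 0%Q
      else let a := Qred ((BfQ n' (r - 1) s + BfQ n' (r - 1) (s - 1)) * (1#2))%Q in
           let b := BfQ n' (r - 2) (s - 1) in
           if Qle_bool a b then a else b
  end.

Lemma Bf_Q : forall n r s, Bf n r s = Q2R (BfQ n r s).
Proof.
  induction n as [|n IH]; intros r s; cbn [Bf BfQ].
  - unfold Q2R; simpl; lra.
  - destruct (Z.leb s 0); [unfold Q2R; simpl; lra|].
    destruct (Z.ltb r s); [unfold Q2R; simpl; lra|].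
    set (a := Qred ((BfQ n (r - 1) s + BfQ n (r - 1) (s - 1)) * (1#2))%Q).
    assert (Ha : Q2R a = (Bf n (r - 1) s + Bf n (r - 1) (s - 1)) / 2).
    { unfold a. rewrite (Qeq_eqR _ _ (Qred_correct _)), Q2R_mult, Q2R_plus, !IH.
      unfold Q2R at 3; simpl. field. }
    rewrite <- Ha, IH.
    change (Rmin (Q2R a) (Q2R (BfQ n (r - 2) (s - 1))) = Q2R (if Qle_bool a (BfQ n (r - 2) (s - 1)) then a else BfQ n (r - 2) (s - 1))).
    destruct (Qle_bool a (BfQ n (r - 2) (s - 1))) eqn:E.
    + apply Qle_bool_iff, Qle_Rle in E. apply Rmin_left; exact E.
    + apply Rmin_right. apply Qle_Rle. apply Qlt_le_weak, Qnot_le_lt.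
      intro H; apply Qle_bool_iff in H; congruence.
Qed.

Lemma exc (r s : Z) (k : nat) (p : positive) :
  Q2R (1 # p) = / 2 ^ k ->
  Qle_bool (1 - (1 # p)) (BfQ (S (Z.to_nat r)) r s) = true ->
  B r s >= 1 - / 2 ^ k.
Proof.
  intros H1 H2. unfold B. rewrite Bf_Q.
  apply Qle_bool_iff, Qle_Rle in H2. rewrite Q2R_minus in H2.
  rewrite <- H1. assert (E1 : Q2R 1 = 1) by (unfold Q2R; simpl; lra).
  rewrite E1 in H2. lra.
Qed.


Lemma Bf_nonneg : forall n r s, 0 <= Bf n r s.
Proof.
  induction n as [|n IH]; intros r s; cbn [Bf]; [lra|].
  destruct (Z.leb s 0); [lra|]. destruct (Z.ltb r s); [lra|].
  apply Rmin_glb; [pose proof (IH (r-1)%Z s); pose proof (IH (r-1)%Z (s-1)%Z); lra | apply IH].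
Qed.

Lemma B_nonneg : forall r s, 0 <= B r s.
Proof. intros; unfold B; apply Bf_nonneg. Qed.

Definition G (x y : R) (r s : Z) : R :=
  if Z.leb (r - 2*s + 2) 0 then 1 else x ^ Z.to_nat (r - 2*s + 2) * y ^ Z.to_nat s.

Lemma G_nonneg x y r s : 0 <= x -> 0 <= y -> 0 <= G x y r s.
Proof. intros. unfold G. destruct (Z.leb _ _); [lra|]. apply Rmult_le_pos; apply pow_le; lra. Qed.

Lemma step x y r s : 1/2 < x -> x <= 1 -> x^2 <= y*(2*x-1) -> 1 <= y ->
  (1 <= s)%Z -> (s <= r)%Z ->
  1 - B (r-1) s <= G x y (r-1) s ->
  1 - B (r-1) (s-1) <= G x y (r-1) (s-1) ->
  1 - B (r-2) (s-1) <= G x y (r-2) (s-1) ->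
  1 - Rmin ((B (r - 1) s + B (r - 1) (s - 1)) / 2) (B (r - 2) (s - 1)) <= G x y r s.
Proof.
  intros Hx1 Hx2 Hxy Hy Hs Hr H1 H2 H3.
  unfold G at 1. destruct (Z.leb (r - 2*s + 2) 0) eqn:E.
  - assert (0 <= Rmin ((B (r - 1) s + B (r - 1) (s - 1)) / 2) (B (r - 2) (s - 1))).
    { apply Rmin_glb; [pose proof (B_nonneg (r-1) s); pose proof (B_nonneg (r-1) (s-1)); lra|apply B_nonneg]. }
    lra.
  - apply Z.leb_gt in E.
    destruct (Z.to_nat (r - 2 * s + 2)) as [|m] eqn:Em; [lia|].
    destruct (Z.to_nat s) as [|ns] eqn:Ens; [lia|].
    assert (G1 : G x y (r-1) s <= x ^ m * y ^ S ns).
    { unfold G. destruct (Z.leb (r - 1 - 2 * s + 2) 0) eqn:E1.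
      - apply Z.leb_le in E1. assert (m = 0%nat) by lia. subst m. simpl.
        rewrite Rmult_1_l. change (1 <= y ^ S ns). apply pow_R1_Rle; lra.
      - apply Z.leb_gt in E1. rewrite Ens.
        replace (Z.to_nat (r - 1 - 2 * s + 2)) with m by lia. lra. }
    assert (G2 : G x y (r-1) (s-1) = x ^ S (S m) * y ^ ns).
    { unfold G. destruct (Z.leb (r - 1 - 2 * (s-1) + 2) 0) eqn:E1.
      - apply Z.leb_le in E1. lia.
      - replace (Z.to_nat (r - 1 - 2 * (s-1) + 2)) with (S (S m)) by lia.
        replace (Z.to_nat (s - 1)) with ns by lia. reflexivity. }
    assert (G3 : G x y (r-2) (s-1) = x ^ S m * y ^ ns).
    { unfold G. destruct (Z.leb (r - 2 - 2 * (s-1) + 2) 0) eqn:E1.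
      - apply Z.leb_le in E1. lia.
      - replace (Z.to_nat (r - 2 - 2 * (s-1) + 2)) with (S m) by lia.
        replace (Z.to_nat (s - 1)) with ns by lia. reflexivity. }
    assert (HP : 0 <= x ^ m) by (apply pow_le; lra).
    assert (HQ : 0 <= y ^ ns) by (apply pow_le; lra).
    set (P := x ^ m) in *. set (Q := y ^ ns) in *.
    simpl in G1, G2, G3 |- *. fold P Q in G1, G2, G3 |- *.
    unfold Rmin. destruct (Rle_dec _ _).
    + assert (0 <= P * Q * (y * (2 * x - 1) - x ^ 2)) by (apply Rmult_le_pos; [apply Rmult_le_pos|]; lra).
      nra.
    + assert (0 <= x * P * Q * (y - 1)) by (apply Rmult_le_pos; [apply Rmult_le_pos; [apply Rmult_le_pos|]|]; lra).
      nra.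
Qed.

Lemma super x y : 1/2 < x -> x <= 1 -> x^2 <= y*(2*x-1) ->
  forall N r s, (Z.to_nat r <= N)%nat -> 1 - B r s <= G x y r s.
Proof.
  intros Hx1 Hx2 Hxy.
  assert (Hy : 1 <= y) by nra.
  induction N as [|N IH]; intros r s Hr; rewrite B_eq;
  (destruct (Z.leb s 0) eqn:E1; [pose proof (G_nonneg x y r s); lra|]);
  (destruct (Z.ltb r s) eqn:E2;
    [apply Z.leb_gt in E1; apply Z.ltb_lt in E2; unfold G;
     replace (Z.leb (r - 2 * s + 2) 0) with true by (symmetry; apply Z.leb_le; lia); lra|]);
  apply Z.leb_gt in E1; apply Z.ltb_ge in E2.
  - lia.
  - apply step; try lra; try lia; apply IH; lia.
Qed.

Lemma pow_le_one t n : 0 <= t <= 1 -> t ^ n <= 1.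
Proof. intros H. induction n; simpl; [lra|]. assert (0 <= t^n) by (apply pow_le; lra). nra. Qed.

Lemma pow_decr t m n : 0 <= t <= 1 -> (m <= n)%nat -> t ^ n <= t ^ m.
Proof.
  intros H Hmn. replace n with (m + (n - m))%nat by lia. rewrite pow_add.
  pose proof (pow_le_one t (n - m) H). assert (0 <= t^m) by (apply pow_le; lra). nra.
Qed.

Lemma alg x y k n : x ^ (k * n + 1) * y ^ n = x * (x ^ k * y) ^ n.
Proof. rewrite pow_add, pow_mult, Rpow_mult_distr. simpl. ring. Qed.

Lemma num1 n : (7 <= n)%nat -> 3/4 * ((3/4) ^ 1 * (9/8)) ^ n <= / 2 ^ 2.
Proof.
  intros H. pose proof (pow_decr ((3/4) ^ 1 * (9/8)) 7 n) as P.
  assert (3/4 * ((3/4) ^ 1 * (9/8)) ^ 7 <= / 2^2) by (simpl; lra).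
  assert (3/4 * ((3/4) ^ 1 * (9/8)) ^ n <= 3/4 * ((3/4) ^ 1 * (9/8)) ^ 7). { apply Rmult_le_compat_l; [lra|]. apply P; [simpl; lra| lia]. }
  lra.
Qed.

Lemma num2 n : (4 <= n)%nat -> 2/3 * ((2/3) ^ 2 * (4/3)) ^ n <= / 2 ^ 3.
Proof.
  intros H. pose proof (pow_decr ((2/3) ^ 2 * (4/3)) 4 n) as P.
  assert (2/3 * ((2/3) ^ 2 * (4/3)) ^ 4 <= / 2^3) by (simpl; lra).
  assert (2/3 * ((2/3) ^ 2 * (4/3)) ^ n <= 2/3 * ((2/3) ^ 2 * (4/3)) ^ 4). { apply Rmult_le_compat_l; [lra|]. apply P; [simpl; lra| lia]. }
  lra.
Qed.

Lemma num3 k n : (3 <= k)%nat -> (3 <= n)%nat -> 5/8 * ((5/8) ^ k * (25/16)) ^ n <= / 2 ^ S k.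
Proof.
  intros Hk Hn.
  assert (Ha : 0 <= (5/8)^k <= (5/8)^3).
  { split; [apply pow_le; lra| apply pow_decr; [lra|lia]]. }
  assert (Ht : 0 <= (5/8) ^ k * (25/16) <= 1) by (simpl in Ha; nra).
  apply Rle_trans with (5/8 * ((5/8) ^ k * (25/16)) ^ 3).
  { apply Rmult_le_compat_l; [lra|]. apply pow_decr; [lra|lia]. }
  replace k with (3 + (k - 3))%nat by lia. set (j := (k - 3)%nat).
  assert (Hab : ((5/8)^j)^3 * 2^j <= 1).
  { rewrite <- pow_mult, Nat.mul_comm, pow_mult, <- Rpow_mult_distr. apply pow_le_one. simpl; lra. }
  assert (Hb : 0 < 2 ^ j) by (apply pow_lt; lra).
  assert (Ha0 : 0 <= (5/8)^j) by (apply pow_le; lra).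
  set (a := (5/8)^j) in *. set (b := 2^j) in *.
  rewrite pow_add. fold a. simpl. fold b.
  assert (H3 : 0 <= a*a*a) by (apply Rmult_le_pos; [apply Rmult_le_pos|]; lra).
  assert (Hinv : a*a*a <= / b). { apply Rmult_le_reg_r with b; [lra|]. rewrite Rinv_l by lra. simpl in Hab. lra. }
  assert (Hi : 0 < / b) by (apply Rinv_0_lt_compat; lra).
  rewrite !Rinv_mult. nra.
Qed.

Lemma num4 k : (5 <= k)%nat -> 5/8 * ((5/8) ^ k * (25/16)) ^ 2 <= / 2 ^ S k.
Proof.
  intros Hk.
  replace k with (5 + (k - 5))%nat by lia. set (j := (k - 5)%nat).
  assert (Hab : ((5/8)^j)^2 * 2^j <= 1).
  { rewrite <- pow_mult, Nat.mul_comm, pow_mult, <- Rpow_mult_distr. apply pow_le_one. simpl; lra. }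
  assert (Hb : 0 < 2 ^ j) by (apply pow_lt; lra).
  assert (Ha0 : 0 <= (5/8)^j) by (apply pow_le; lra).
  set (a := (5/8)^j) in *. set (b := 2^j) in *.
  rewrite pow_add. fold a. simpl. fold b.
  assert (H3 : 0 <= a*a) by (apply Rmult_le_pos; lra).
  assert (Hinv : a*a <= / b). { apply Rmult_le_reg_r with b; [lra|]. rewrite Rinv_l by lra. simpl in Hab. lra. }
  assert (Hi : 0 < / b) by (apply Rinv_0_lt_compat; lra).
  rewrite !Rinv_mult. nra.
Qed.

Lemma gen x y k n : 1/2 < x -> x <= 1 -> x^2 <= y*(2*x-1) -> (1 <= n)%nat ->
  1 - B ((Z.of_nat k + 2) * Z.of_nat n - 1) (Z.of_nat n) <= x * (x ^ k * y) ^ n.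
Proof.
  intros H1 H2 H3 Hn. rewrite <- alg.
  eapply Rle_trans; [apply (super x y H1 H2 H3 _ _ _ (le_n _))|].
  unfold G.
  assert (He : ((Z.of_nat k + 2) * Z.of_nat n - 1 - 2 * Z.of_nat n + 2)%Z = Z.of_nat (k * n + 1)).
  { rewrite Nat2Z.inj_add, Nat2Z.inj_mul. change (Z.of_nat 1) with 1%Z. ring. }
  rewrite He. replace (Z.leb (Z.of_nat (k * n + 1)) 0) with false by (symmetry; apply Z.leb_gt; lia).
  rewrite !Nat2Z.id. lra.
Qed.

Ltac exc_tac q := apply exc with (p := q); [unfold Q2R; simpl; field | vm_compute; reflexivity].

Theorem mainTheorem20 : forall c s : Z, (3 <= c)%Z -> (2 <= s)%Z ->
  B (c * s - 1) s >= 1 - / 2 ^ (Z.to_nat (c - 1)).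
Proof.
  intros c s Hc Hs.
  pose (k := Z.to_nat (c - 2)). assert (Ec : c = (Z.of_nat k + 2)%Z) by lia.
  pose (n := Z.to_nat s). assert (Es : s = Z.of_nat n) by lia.
  clearbody k n. subst c s.
  replace (Z.to_nat (Z.of_nat k + 2 - 1)) with (S k) by lia.
  assert (Hk : (1 <= k)%nat) by lia. assert (Hn : (2 <= n)%nat) by lia. clear Hc Hs.
  destruct (Nat.eq_dec k 1) as [->|Hk1].
  { destruct (le_lt_dec 7 n).
    - pose proof (gen (3/4) (9/8) 1 n ltac:(lra) ltac:(lra) ltac:(simpl; lra) ltac:(lia)).
      pose proof (num1 n l). lra.
    - destruct n as [|[|[|[|[|[|[|n]]]]]]]; try lia.
      + exc_tac 4%positive.
      + exc_tac 4%positive.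
      + exc_tac 4%positive.
      + exc_tac 4%positive.
      + exc_tac 4%positive. }
  destruct (Nat.eq_dec k 2) as [->|Hk2].
  { destruct (le_lt_dec 4 n).
    - pose proof (gen (2/3) (4/3) 2 n ltac:(lra) ltac:(lra) ltac:(simpl; lra) ltac:(lia)).
      pose proof (num2 n l). lra.
    - destruct n as [|[|[|[|n]]]]; try lia.
      + exc_tac 8%positive.
      + exc_tac 8%positive. }
  pose proof (gen (5/8) (25/16) k n ltac:(lra) ltac:(lra) ltac:(simpl; lra) ltac:(lia)) as G0.
  destruct (le_lt_dec 3 n).
  - pose proof (num3 k n ltac:(lia) l). lra.
  - assert (n = 2%nat) by lia. subst n.
    destruct (le_lt_dec 5 k).
    + pose proof (num4 k l0). lra.
    + clear G0. destruct k as [|[|[|[|[|k]]]]]; try lia.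
      * exc_tac 16%positive.
      * exc_tac 32%positive.
Qed.
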